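(* Let $N,K,V$ be positive integers. For $v=1,\dots,V$ let $\mathbf{z}_i^v\in\mathbb{R}^{d_v}$ ($i=1,\dots,N$) be representations, $\boldsymbol{\mu}_1^v,\dots,\boldsymbol{\mu}_K^v\in\mathbb{R}^{d_v}$ cluster centroids, and $w^v>0$ scaling factors. Let $\mathcal{S}(\mathbf{a},\mathbf{b})=\frac{1}{1+\|\mathbf{a}-\mathbf{b}\|_2^2}$ and define view-wise soft labels $y_{ij}^v=\mathcal{S}(\mathbf{z}_i^v,\boldsymbol{\mu}_j^v)/\sum_{k=1}^K\mathcal{S}(\mathbf{z}_i^v,\boldsymbol{\mu}_k^v)$. Define the scaled representation $\mathbf{z}_i=[w^1\mathbf{z}_i^1\ \cdots\ w^V\mathbf{z}_i^V]$, the scaled centroids $\mathbf{c}_j=[w^1\boldsymbol{\mu}_j^1\ \cdots\ w^V\boldsymbol{\mu}_j^V]$, and the robust soft labels $y_{ij(t)}=\mathcal{S}(\mathbf{z}_i,\mathbf{c}_j)/\sum_{k=1}^K\mathcal{S}(\mathbf{z}_i,\mathbf{c}_k)$. Suppose that for a sample $i$ and a cluster $a$, the sample is informative and assigned to cluster $a$ in every view, i.e. $y_{ia}^v>y_{ij}^v$ for all $j\neq a$ and all $v=1,\dots,V$. Then $y_{ia(t)}>y_{ij(t)}$ for all $j\neq a$, i.e. the cluster assignment $\arg\max_j y_{ij(t)}$ of the sample in the robust soft labels is also $a$.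
   Context: Setting: multi-view clustering with $N$ samples, $V$ views, and $K$ clusters; $\mathbf{z}_i^v$ is the learned representation of sample $i$ in view $v$, and the cluster assignment of sample $i$ from soft labels $y_{ij}$ is $\arg\max_j y_{ij}$. *)

(* Defs.v *)
From mathcomp Require Import all_boot all_order all_algebra.
Set Implicit Arguments. Unset Strict Implicit. Unset Printing Implicit Defensive.
Import Order.TTheory GRing.Theory Num.Theory.
Local Open Scope ring_scope.

Definition sqdist (R : realFieldType) (n : nat) (a b : 'rV[R]_n) : R :=
  \sum_(k < n) (a 0 k - b 0 k) ^+ 2.

Definition simS (R : realFieldType) (n : nat) (a b : 'rV[R]_n) : R :=
  1 / (1 + sqdist a b).

Definition soft_label (R : realFieldType) (n N K : nat)
  (z : 'I_N -> 'rV[R]_n) (c : 'I_K -> 'rV[R]_n) (i : 'I_N) (j : 'I_K) : R :=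
  simS (z i) (c j) / \sum_(k < K) simS (z i) (c k).

Definition scaled_concat (R : realFieldType) (V : nat) (d : 'I_V -> nat)
  (w : 'I_V -> R) (x : forall v : 'I_V, 'rV[R]_(d v)) : 'rV[R]_(\sum_(v < V) d v) :=
  \mxrow_(v < V) (w v *: x v).

(* Main.v *)
Require Import Defs.
From mathcomp Require Import all_boot all_order all_algebra.
Import Order.TTheory GRing.Theory Num.Theory.
Local Open Scope ring_scope.

Lemma sqdist_mxrow (R : realFieldType) V (d : 'I_V -> nat)
  (A B : forall v : 'I_V, 'rV[R]_(d v)) :
  sqdist (\mxrow_v A v) (\mxrow_v B v) = \sum_(v < V) sqdist (A v) (B v).
Proof.
rewrite /sqdist.
pose G := fun p : {v : 'I_V & 'I_(d v)} => (A (tag p) 0 (tagged p) - B (tag p) 0 (tagged p)) ^+ 2.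
transitivity (\sum_(s < \sum_(v < V) d v) G (tagnat.sig s)).
  by apply: eq_bigr => s _; rewrite !mxE.
rewrite (reindex (@tagnat.rank _ d)); last first.
  by exists (@tagnat.sig _ d) => x _; [rewrite tagnat.rankK | rewrite tagnat.sigK].
under eq_bigr do rewrite tagnat.rankK.
rewrite (sig_big_dep (fun v => true) (fun v j => true) (fun v (j : 'I_(d v)) => (A v 0 j - B v 0 j) ^+ 2)) /=.
by apply: eq_bigr => -[v j].
Qed.

Lemma sqdist_ge0 (R : realFieldType) n (a b : 'rV[R]_n) : 0 <= sqdist a b.
Proof. by apply: sumr_ge0 => k _; apply: sqr_ge0. Qed.

Lemma sqdist_scale (R : realFieldType) n (c : R) (a b : 'rV[R]_n) :
  sqdist (c *: a) (c *: b) = c ^+ 2 * sqdist a b.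
Proof.
rewrite /sqdist mulr_sumr; apply: eq_bigr => k _; rewrite !mxE.
by rewrite -mulrBr exprMn.
Qed.

Lemma simS_gt0 (R : realFieldType) n (a b : 'rV[R]_n) : 0 < simS a b.
Proof.
rewrite /simS div1r invr_gt0; apply: (lt_le_trans ltr01).
by rewrite lerDl sqdist_ge0.
Qed.

Lemma simS_lt (R : realFieldType) n (a b c : 'rV[R]_n) :
  (simS a b < simS a c) = (sqdist a c < sqdist a b).
Proof.
rewrite /simS !div1r ltf_pV2 ?ltrD2l // ?posrE; apply: (lt_le_trans ltr01);
by rewrite lerDl sqdist_ge0.
Qed.

Lemma soft_lt (R : realFieldType) n N K (z : 'I_N -> 'rV[R]_n) (c : 'I_K -> 'rV[R]_n) i j a :
  (soft_label z c i j < soft_label z c i a) = (sqdist (z i) (c a) < sqdist (z i) (c j)).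
Proof.
rewrite /soft_label ltr_pM2r ?simS_lt // invr_gt0.
rewrite (bigD1 j) //=; apply: (lt_le_trans (@simS_gt0 _ _ (z i) (c j))).
by rewrite lerDl; apply: sumr_ge0 => k _; apply: ltW; apply: (@simS_gt0 _ _).
Qed.

Theorem theorem3 (R : realFieldType) (N K V : nat) (d : 'I_V -> nat)
  (z : forall v : 'I_V, 'I_N -> 'rV[R]_(d v))
  (mu : forall v : 'I_V, 'I_K -> 'rV[R]_(d v))
  (w : 'I_V -> R) :
  (0 < N)%N -> (0 < K)%N -> (0 < V)%N ->
  (forall v, 0 < w v) ->
  forall (i : 'I_N) (a : 'I_K),
  (forall (v : 'I_V) (j : 'I_K), j != a ->
     soft_label (z v) (mu v) i j < soft_label (z v) (mu v) i a) ->
  forall j : 'I_K, j != a ->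
    soft_label (fun i' => scaled_concat w (fun v => z v i'))
               (fun j' => scaled_concat w (fun v => mu v j')) i j
    < soft_label (fun i' => scaled_concat w (fun v => z v i'))
                 (fun j' => scaled_concat w (fun v => mu v j')) i a.
Proof.
move=> _ _ V0 wpos i a H j ja.
rewrite soft_lt /scaled_concat !sqdist_mxrow.
apply: ltr_sum.
  by apply/hasP; exists (Ordinal V0); [rewrite mem_index_enum|].
move=> v _; rewrite !sqdist_scale ltr_pM2l ?exprn_gt0 ?wpos //.
by rewrite -soft_lt; apply: H.
Qed.
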